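(* Let $n\ge 3$, let $\mathbf{x}$ be a vertex of $P^n_{\mathrm{SEP}}$ and let $ab$ be an edge with $x_{ab}=1$. Then $\mathrm{Gap}^+(\mathrm{bb}(\mathbf{x},ab))\ge\mathrm{Gap}^+(\mathbf{x})$.
   Context: $K_n=(V_n,E_n)$ is the complete undirected graph on $n$ nodes; $\delta(S)$ is the set of edges with exactly one endpoint in $S$. $P^n_{\mathrm{SEP}}=\{\mathbf{x}\in\mathbb{R}^{E_n} : \sum_{e\in\delta(v)}x_e=2\ \forall v;\ \sum_{e\in\delta(S)}x_e\ge 2\ \forall S \text{ with } 3\le|S|\le n-3;\ 0\le x_e\le 1\}$; a vertex is an extreme point. A cost $\mathbf{c}\in\mathbb{R}^{E_n}_{\ge0}$ is metric if $c_{ik}+c_{kj}\ge c_{ij}$ for all distinct $i,j,k$; $\mathrm{TSP}(\mathbf{c})$ is the minimum cost of a Hamiltonian cycle. $\mathrm{Gap}^+(\mathbf{x})=\sup\{\mathrm{TSP}(\mathbf{c})/(\mathbf{c}\cdot\mathbf{x}) : \mathbf{c}\text{ metric on } K_n\}$. bb-move: for $\mathbf{x}\in P^n_{\mathrm{SEP}}$ and an edge $ab$ with $x_{ab}=1$, $\mathrm{bb}(\mathbf{x},ab)=\mathbf{x}'\in\mathbb{R}^{E_{n+1}}$, where $V_{n+1}=V_n\cup\{w\}$, defined by $x'_{ab}=0$, $x'_{aw}=x'_{wb}=1$, $x'_e=0$ for $e\in\delta(w)\setminus\{aw,wb\}$, and $x'_e=x_e$ for all other edges (it is known that $\mathrm{bb}(\mathbf{x},ab)$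 is a vertex of $P^{n+1}_{\mathrm{SEP}}$ iff $\mathbf{x}$ is a vertex of $P^n_{\mathrm{SEP}}$). *)

(* Defs.v *)
From HB Require Import structures.
From mathcomp Require Import all_boot all_order all_algebra all_fingroup.
From mathcomp Require Import all_classical all_reals ereal.
Set Implicit Arguments. Unset Strict Implicit. Unset Printing Implicit Defensive.
Import Order.TTheory GRing.Theory Num.Theory.
Local Open Scope ring_scope.

(* K_n: nodes 'I_n; an edge is a 2-element subset of 'I_n.
   A vector of R^{E_n} is represented by a function {set 'I_n} -> R of which
   only the values on edges (2-subsets) are ever used. *)
Definition edges (n : nat) : {set {set 'I_n}} := [set e : {set 'I_n} | #|e| == 2%N].

Section Defs.
Variable R : realType.

Definition cut_sum n (x : {set 'I_n} -> R) (S : {set 'I_n}) : R :=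
  \sum_(e in edges n | #|e :&: S| == 1%N) x e.

Definition in_SEP n (x : {set 'I_n} -> R) : Prop :=
  [/\ (forall v : 'I_n, cut_sum x [set v] = 2),
      (forall S : {set 'I_n}, (3 <= #|S|)%N -> (#|S| <= n - 3)%N -> 2 <= cut_sum x S)
    & (forall e, e \in edges n -> 0 <= x e <= 1)].

(* extreme point of P^n_SEP (equality of vectors = equality on all edges) *)
Definition is_vertex_SEP n (x : {set 'I_n} -> R) : Prop :=
  in_SEP x /\
  forall (y z : {set 'I_n} -> R) (t : R), in_SEP y -> in_SEP z -> 0 < t < 1 ->
    (forall e, e \in edges n -> x e = t * y e + (1 - t) * z e) ->
    forall e, e \in edges n -> y e = z e.

Definition metric n (c : {set 'I_n} -> R) : Prop :=
  (forall e, e \in edges n -> 0 <= c e) /\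
  forall i j k : 'I_n, i != j -> j != k -> i != k ->
    c [set i; j] <= c [set i; k] + c [set k; j].

Definition dot n (c x : {set 'I_n} -> R) : R := \sum_(e in edges n) c e * x e.

Definition tour_cost n (c : {set 'I_n} -> R) (s : {perm 'I_n}) : R :=
  \sum_(k : 'I_n) c [set s k; s (ordS k)].

Definition TSP n (c : {set 'I_n} -> R) : R :=
  \big[Num.min/tour_cost c 1]_(s : {perm 'I_n}) tour_cost c s.

Definition GapPlus n (x : {set 'I_n} -> R) : \bar R :=
  ereal_sup [set ((TSP c / dot c x)%:E) | c in [set c : {set 'I_n} -> R | metric c /\ dot c x != 0]]%classic.

(* bb-move: the new node w is ord_max of 'I_n.+1, old nodes embedded by widen_ord *)
Definition old n (i : 'I_n) : 'I_n.+1 := widen_ord (leqnSn n) i.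

Definition bb n (x : {set 'I_n} -> R) (a b : 'I_n) : {set 'I_n.+1} -> R :=
  fun e =>
    if ord_max \in e then
      (if (e == [set ord_max; old a]) || (e == [set ord_max; old b]) then 1 else 0)
    else if e == [set old a; old b] then 0
    else x [set i : 'I_n | old i \in e].

End Defs.

(* Main.v *)
Require Import Defs.
From mathcomp Require Import all_boot all_order all_algebra all_fingroup.
From mathcomp Require Import all_classical all_reals ereal.
Import Order.TTheory GRing.Theory Num.Theory.
Local Open Scope ring_scope.
Set Implicit Arguments. Unset Strict Implicit. Unset Printing Implicit Defensive.
Section Main.
Variable R : realType.

Definition cc n (c : {set 'I_n} -> R) (u v : 'I_n) : R := if u == v then 0 else c [set u; v].
Definition fw n (a : 'I_n) (i : 'I_n.+1) : 'I_n := if unlift ord_max i is Some j then j else a.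
Definition cp n (c : {set 'I_n} -> R) (a : 'I_n) (e : {set 'I_n.+1}) : R :=
  if #|[set fw a y | y in e]| == 2%N then c [set fw a y | y in e] else 0.

Lemma old_lift n (i : 'I_n) : old i = lift ord_max i.
Proof. by apply: val_inj => /=; rewrite /bump leqNgt ltn_ord. Qed.

Lemma fw_old n (a : 'I_n) i : fw a (old i) = i.
Proof. by rewrite /fw old_lift liftK. Qed.

Lemma fw_max n (a : 'I_n) : fw a ord_max = a.
Proof. by rewrite /fw unlift_none. Qed.

Lemma old_fw n (a : 'I_n) (y : 'I_n.+1) : y != ord_max -> old (fw a y) = y.
Proof.
move=> hy; rewrite eq_sym in hy; case: (unlift_some hy) => j -> _.
by rewrite /fw liftK old_lift.
Qed.

Lemma old_neq_max n (i : 'I_n) : old i != ord_max.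
Proof. by rewrite -val_eqE /= neq_ltn ltn_ord. Qed.

Lemma old_inj n : injective (@old n).
Proof. by move=> i j /(congr1 val) h; apply: val_inj. Qed.

Lemma cpE n (c : {set 'I_n} -> R) a (i j : 'I_n.+1) :
  cp c a [set i; j] = cc c (fw a i) (fw a j).
Proof.
rewrite /cp /cc imsetU1 imset_set1 cards2.
by case: (eqVneq (fw a i) (fw a j)) => [->|ne]; rewrite ?eqxx // ne.
Qed.

Lemma cc_ge0 n (c : {set 'I_n} -> R) u v : metric c -> 0 <= cc c u v.
Proof.
move=> mc; rewrite /cc; case: eqP => // /eqP ne; apply: mc.1.
by rewrite inE cards2 ne.
Qed.

Lemma cc_tri n (c : {set 'I_n} -> R) u v t : metric c ->
  cc c u v <= cc c u t + cc c t v.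
Proof.
move=> mc; rewrite {1}/cc; case: eqP => [_|/eqP uv].
  by rewrite addr_ge0 // cc_ge0.
case: (eqVneq t u) => [->|tu].
  by rewrite /cc eqxx add0r (negbTE uv).
case: (eqVneq t v) => [->|tv].
  by rewrite /cc eqxx addr0 (negbTE uv).
rewrite /cc [u == t]eq_sym (negbTE tu) (negbTE tv).
by apply: mc.2 => //; rewrite eq_sym.
Qed.

Lemma cc_edge n (c : {set 'I_n} -> R) u v : u != v -> cc c u v = c [set u; v].
Proof. by move=> h; rewrite /cc (negbTE h). Qed.

Lemma cp_metric n (c : {set 'I_n} -> R) a : metric c -> metric (cp c a).
Proof.
move=> mc; split.
  by move=> e _; rewrite /cp; case: ifP => // h; apply: mc.1; rewrite inE.
by move=> i j k _ _ _; rewrite !cpE; apply: cc_tri.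
Qed.

Lemma bigmin_le (I : eqType) (r : seq I) (F : I -> R) x0 i0 :
  i0 \in r -> \big[Num.min/x0]_(i <- r) F i <= F i0.
Proof.
elim: r => // y r IH; rewrite in_cons big_cons => /orP [/eqP->|/IH h].
  by rewrite ge_min lexx.
by rewrite ge_min h orbT.
Qed.

Lemma TSP_le n (c : {set 'I_n} -> R) s : TSP c <= tour_cost c s.
Proof. by rewrite /TSP; apply: bigmin_le; rewrite mem_index_enum. Qed.

Lemma TSP_ge n (c : {set 'I_n} -> R) y : (forall s, y <= tour_cost c s) -> y <= TSP c.
Proof.
move=> h; rewrite /TSP; apply: (big_ind (fun z => y <= z)) => //.
by move=> u v hu hv; rewrite le_min hu hv.
Qed.


Definition rotP N := perm (@ordS_inj N).

Lemma tour_rot1 N (c : {set 'I_N} -> R) (s : {perm 'I_N}) :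
  tour_cost c (rotP N * s)%g = tour_cost c s.
Proof.
rewrite /tour_cost [in RHS](reindex_inj (@ordS_inj N)).
by apply: eq_bigr => k _; rewrite !permM !permE.
Qed.

Lemma tour_rot N (c : {set 'I_N} -> R) (s : {perm 'I_N}) q :
  tour_cost c ((rotP N ^+ q) * s)%g = tour_cost c s.
Proof.
elim: q => [|q IH]; first by rewrite expg0 mul1g.
by rewrite expgS -mulgA tour_rot1.
Qed.

Lemma iter_ordS N (i : 'I_N) q : val (iter q (@ordS N) i) = ((i + q) %% N)%N.
Proof.
elim: q => [|q IH] /=; first by rewrite addn0 modn_small.
by rewrite IH addnS -addn1 modnDml addn1.
Qed.

Lemma rot_exists n (c : {set 'I_n.+1} -> R) (s : {perm 'I_n.+1}) :
  exists s2 : {perm 'I_n.+1}, s2 ord_max = ord_max /\ tour_cost c s2 = tour_cost c s.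
Proof.
set p := (s^-1)%g ord_max.
exists ((rotP n.+1 ^+ p.+1) * s)%g; split; last exact: tour_rot.
rewrite permM.
have -> : (rotP n.+1 ^+ p.+1)%g ord_max = p.
  apply: val_inj; rewrite permX.
  have -> : iter p.+1 (rotP n.+1) ord_max = iter p.+1 (@ordS n.+1) ord_max.
    by apply: eq_iter => y; rewrite permE.
  by rewrite iter_ordS /= addnS -addSn modnDl modn_small.
by rewrite /p permKV.
Qed.

Lemma tour_bb m (c : {set 'I_m.+2} -> R) (a : 'I_m.+2) (s2 : {perm 'I_m.+3}) :
  metric c -> s2 ord_max = ord_max ->
  exists s : {perm 'I_m.+2}, tour_cost c s <= tour_cost (cp c a) s2.
Proof.
move=> mc s2max.
set g := fun k : 'I_m.+2 => fw a (s2 (old k)).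
have s2old k : s2 (old k) != ord_max.
  by rewrite -s2max (inj_eq perm_inj) old_neq_max.
have g_inj : injective g.
  move=> k1 k2 /(congr1 (@old _)); rewrite !old_fw //.
  by move/perm_inj/old_inj.
exists (perm g_inj).
have ordS_neq (k : 'I_m.+2) : ordS k != k.
  rewrite -val_eqE /=; case: (ltngtP k.+1 m.+2) => h.
  - by rewrite modn_small // (gtn_eqF (ltnSn k)).
  - by move: (ltn_ord k); rewrite ltnNge -ltnS h.
  - by rewrite h modnn; move/succn_inj: h => ->.
have BE k : c [set perm g_inj k; perm g_inj (ordS k)] = cc c (g k) (g (ordS k)).
  by rewrite !permE cc_edge // (inj_eq g_inj) eq_sym.
rewrite /tour_cost [X in _ <= X]big_ord_recr /=.
under eq_bigr do rewrite BE.
rewrite [X in X <= _](bigD1 ord_max) //= [X in _ <= X + _](bigD1 ord_max) //=.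
have rest : \sum_(i < m.+2 | i != ord_max) cc c (g i) (g (ordS i)) =
   \sum_(i < m.+2 | i != ord_max)
      cp c a [set s2 (widen_ord (leqnSn m.+2) i); s2 (ordS (widen_ord (leqnSn m.+2) i))].
  apply: eq_bigr => k hk; rewrite cpE.
  have -> : ordS (widen_ord (leqnSn m.+2) k) = old (ordS k).
    apply: val_inj => /=.
    have hk' : (k.+1 < m.+2)%N.
      by rewrite ltnS ltn_neqAle -ltnS ltn_ord andbT; move: hk; rewrite -val_eqE.
    by rewrite !modn_small // ltnW.
  by [].
rewrite rest.
have e1 : ordS (widen_ord (leqnSn m.+2) (@ord_max m.+1)) = ord_max.
  by apply: val_inj => /=; rewrite modn_small.
have e2 : ordS (@ord_max m.+2) = old (ordS (@ord_max m.+1)).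
  by apply: val_inj => /=; rewrite !modnn.
rewrite e1 e2 s2max !cpE fw_max.
rewrite addrAC lerD2r.
exact: cc_tri.
Qed.

Lemma old_set2 n (a b : 'I_n) : [set old a; old b] = [set old x | x in [set a; b]].
Proof. by rewrite imsetU1 imset_set1. Qed.

Lemma old_pre n (e : {set 'I_n.+1}) (a : 'I_n) : ord_max \notin e ->
  [set old x | x in [set i | old i \in e]] = e.
Proof.
move=> he; apply/setP => y; apply/imsetP/idP => [[i]|hy].
  by rewrite inE => hi ->.
have ym : y != ord_max by apply: contraNneq he => <-.
by exists (fw a y); rewrite ?inE old_fw.
Qed.

Lemma edges_old n (a : 'I_n) (e : {set 'I_n.+1}) :
  (e \in [set [set old x | x in e0] | e0 : {set 'I_n} in edges n]) =
  (e \in edges n.+1) && (ord_max \notin e).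
Proof.
apply/imsetP/andP => [[e0 he0 ->]|[he hm]].
  split; first by rewrite inE card_imset //; [rewrite inE in he0 | exact: old_inj].
  by apply/imsetP => -[y _ /eqP]; rewrite eq_sym (negbTE (old_neq_max y)).
exists [set i | old i \in e]; last by rewrite (old_pre a hm).
by rewrite inE -(card_imset _ (@old_inj n)) (old_pre a hm); rewrite inE in he.
Qed.

Lemma dot_bb n (c : {set 'I_n} -> R) (x : {set 'I_n} -> R) (a b : 'I_n) :
  a != b -> x [set a; b] = 1 -> dot (cp c a) (bb x a b) = dot c x.
Proof.
move=> ab xab.
rewrite /dot [in LHS](bigID (fun e : {set 'I_n.+1} => ord_max \in e)) /=.
have e1E : [set ord_max; old a] \in edges n.+1.
  by rewrite inE cards2 (eq_sym ord_max) old_neq_max.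
have e2E : [set ord_max; old b] \in edges n.+1.
  by rewrite inE cards2 (eq_sym ord_max) old_neq_max.
have e12 : [set ord_max; old b] != [set ord_max; old a].
  apply/negP => /eqP h; have : old b \in [set ord_max; old a] by rewrite -h set22.
  rewrite !inE (negbTE (old_neq_max b)) /= (inj_eq (@old_inj n)).
  by rewrite eq_sym (negbTE ab).
rewrite (bigD1 [set ord_max; old a]) ?e1E ?set21 //=.
rewrite (bigD1 [set ord_max; old b]) ?e2E ?set21 ?e12 //=.
rewrite big1; last first.
  move=> e /andP [/andP [/andP [_ he] h1] h2].
  by rewrite /bb he (negbTE h1) (negbTE h2) mulr0.
rewrite /bb !set21 !eqxx /= orbT !mulr1 addr0 !cpE fw_max !fw_old.
rewrite /cc eqxx (negbTE ab) add0r.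
rewrite (eq_bigl (fun e => e \in [set [set old x | x in e0] | e0 : {set 'I_n} in edges n]));
  last by move=> e; rewrite edges_old.
rewrite big_imset /=; last by move=> u v _ _; apply: imset_inj; exact: old_inj.
have abE : [set a; b] \in edges n by rewrite inE cards2 ab.
rewrite [in RHS](bigD1 [set a; b]) //= (bigD1 [set a; b]) //= xab mulr1.
congr (_ + _).
have fwo (e0 : {set 'I_n}) : [set fw a y | y in [set old x | x in e0]] = e0.
  by rewrite -imset_comp (eq_imset _ (@fw_old n a)) imset_id.
rewrite -old_set2.
have -> : ord_max \in [set old a; old b] = false.
  by rewrite !inE !(eq_sym ord_max) !(negbTE (old_neq_max _)).
rewrite eqxx mulr0 add0r.
apply: eq_bigr => e0 /andP [he0 hne].
rewrite /cp fwo; move: he0; rewrite inE => /eqP ->; rewrite eqxx.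
have -> : (ord_max \in [set old x | x in e0]) = false.
  by apply/imsetP => -[y _ /eqP]; rewrite eq_sym (negbTE (old_neq_max y)).
rewrite old_set2 (inj_eq (imset_inj (@old_inj n))) (negbTE hne).
congr (_ * x _); apply/setP => i; rewrite inE mem_imset //; exact: old_inj.
Qed.

End Main.

Theorem mainTheorem5 (R : realType) (n : nat) (x : {set 'I_n} -> R) (a b : 'I_n) :
  (3 <= n)%N -> is_vertex_SEP x -> a != b -> x [set a; b] = 1 ->
  (GapPlus x <= GapPlus (bb x a b))%E.
Proof.
case: n => [|[|m]] // in x a b *.
move=> _ [[_ _ xge0] _] ab xab.
apply: ge_ereal_sup => _ [c [mc dc] <-].
have hd : dot (cp c a) (bb x a b) = dot c x by exact: dot_bb.
have dpos : 0 < dot c x.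
  rewrite lt_def dc /=; apply: sumr_ge0 => e he.
  by apply: mulr_ge0; [exact: mc.1 | case/andP: (xge0 e he)].
apply: le_trans (ereal_sup_ubound _); last first.
  by exists (cp c a); [split; [exact: cp_metric | rewrite hd] | reflexivity].
rewrite lee_fin hd ler_wpM2r //; first by rewrite invr_ge0 ltW.
apply: TSP_ge => s'.
have [s2 [s2m <-]] := rot_exists (cp c a) s'.
have [s hs] := tour_bb a mc s2m.
exact: le_trans (TSP_le c s) hs.
Qed.
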